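(* Under the setting and with the quantities $\boldsymbol{\Psi}_{i,j}$, $\mathbf{D}_i$ defined in the context, run the following procedure on block arrays $\mathbf{N}_{j,k}$, $\mathbf{P}_{j,k}$ indexed by related pairs $(j,k)$ (i.e. $j=k$, $j\in P_k$, or $k\in P_j$): (1) Initialize $\mathbf{N}_{j,k}=\boldsymbol{\Sigma}^<_{j,j}\big((\mathbf{A}^{-1})_{k,j}\big)^\dagger$ for every related pair $(j,k)$. (2) For $l=1,\dots,\lambda-1$ in increasing order, for every cluster $i$ with $\ell(i)=l$, and for all $j,k\in P_i$: replace $\mathbf{N}_{j,k}$ by $\mathbf{N}_{j,k}+\boldsymbol{\Psi}_{i,j}^T\mathbf{N}_{i,k}$. (3) Set $\mathbf{P}_{j,k}=\mathbf{D}_j^{-1}\mathbf{N}_{j,k}$ for every related pair $(j,k)$. (4) For $l=\lambda-1,\dots,1$ in decreasing order, for every cluster $i$ with $\ell(i)=l$: first, for every $j\in P_i$ replace $\mathbf{P}_{i,j}$ by $\mathbf{P}_{i,j}+\sum_{k\in P_i}\boldsymbol{\Psi}_{i,k}\mathbf{P}_{k,j}$; then set $\mathbf{P}_{j,i}=-(\mathbf{P}_{i,j})^\dagger$ for every $j\in P_i$; then replace $\mathbf{P}_{i,i}$ by $\mathbf{P}_{i,i}+\sum_{j\in P_i}\boldsymbol{\Psi}_{i,j}\mathbf{P}_{j,i}$. Then at termination, for every cluster $i$ and every $j\in P_i\cup\{i\}$, $\mathbf{P}_{i,j}=\mathbf{G}^<_{i,j}$ and $\mathbf{P}_{j,i}=\mathbf{G}^<_{j,i}$,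 where $\mathbf{G}^<=\mathbf{A}^{-1}\boldsymbol{\Sigma}^<(\mathbf{A}^{-1})^\dagger$. In particular all diagonal blocks $\mathbf{G}^<_{i,i}$ are obtained.
   Context: Let $\mathbf{A}\in\mathbb{C}^{n\times n}$ be invertible and complex symmetric ($\mathbf{A}^T=\mathbf{A}$; ${}^T$ is the non-conjugated transpose, $\dagger$ the conjugate transpose). The index set is partitioned into clusters $1,\dots,M$ organized as a rooted tree (as produced by nested dissection: each separator is the parent of the clusters it separates). For a cluster $i$, $P_i$ denotes the set of its ancestors in the tree. Blocks are written $\mathbf{A}_{i,j}$. Assume $\mathbf{A}_{i,j}=\mathbf{0}$ unless $i=j$, $i\in P_j$ or $j\in P_i$. Each cluster $i$ has a level $\ell(i)\in\{1,\dots,\lambda\}$ with $\ell(j)>\ell(i)$ whenever $j\in P_i$; the root is the only cluster of level $\lambda$. Folding: set $\mathbf{A}^{(0)}=\mathbf{A}$. For $l=1,\dots,\lambda-1$: set $\mathbf{A}^{(l)}=\mathbf{A}^{(l-1)}$, and for each cluster $i$ with $\ell(i)=l$: define $\boldsymbol{\Psi}_{i,j}=-(\mathbf{A}^{(l)}_{i,i})^{-1}\mathbf{A}^{(l)}_{i,j}$ for $j\in P_i$; replace $\mathbf{A}^{(l)}_{j,k}$ by $\mathbf{A}^{(l)}_{j,k}+\boldsymbol{\Psi}_{i,j}^T\mathbf{A}^{(l)}_{i,k}$ for all $j,k\in P_i$; and set $\mathbf{A}^{(l)}_{i,j}=\mathbf{A}^{(l)}_{j,i}=\mathbf{0}$ for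 $j\in P_i$. It is assumed that every block $\mathbf{A}^{(l)}_{i,i}$ inverted here is invertible and that the final diagonal blocks are invertible. Let $\mathbf{D}_i$ denote the $(i,i)$ diagonal block of $\mathbf{A}^{(\lambda-1)}$ (which is block diagonal). $\boldsymbol{\Sigma}^<$ is block diagonal with respect to the clusters (diagonal blocks $\boldsymbol{\Sigma}^<_{i,i}$) and skew-Hermitian: $(\boldsymbol{\Sigma}^<)^\dagger=-\boldsymbol{\Sigma}^<$. $(\mathbf{A}^{-1})_{k,j}$ and $\mathbf{G}^<_{i,j}$ denote cluster blocks of the respective matrices. *)

(* Defs.v *)
From HB Require Import structures.
From mathcomp Require Import all_boot all_order all_algebra.
Set Implicit Arguments. Unset Strict Implicit. Unset Printing Implicit Defensive.
Import Order.TTheory GRing.Theory Num.Theory.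
Local Open Scope ring_scope.

(* Clusters are 'I_M, cluster i has size s i; a block matrix is a family of
   blocks  B i j : 'M_(s i, s j). *)
Definition blocks (C : Type) (M : nat) (s : 'I_M -> nat) :=
  forall i j : 'I_M, 'M[C]_(s i, s j).

Definition adjmx (C : numClosedFieldType) (m n : nat) (X : 'M[C]_(m, n)) : 'M[C]_(n, m) :=
  (map_mx (fun z => z^*) X)^T.

(* j \in P_i : j is a strict ancestor of i in the tree given by the parent
   map par (the root r satisfies par r = r). *)
Definition anc (M : nat) (par : 'I_M -> 'I_M) (i j : 'I_M) : bool :=
  (j != i) && [exists k : 'I_M, iter k par i == j].

Definition related (M : nat) (par : 'I_M -> 'I_M) (j k : 'I_M) : bool :=
  [|| j == k, anc par k j | anc par j k].

Definition ancs (M : nat) (par : 'I_M -> 'I_M) (i : 'I_M) : seq 'I_M :=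
  [seq j <- enum 'I_M | anc par i j].

Definition foldOrder (M : nat) (lev : 'I_M -> nat) (lam : nat) : seq 'I_M :=
  flatten [seq [seq i <- enum 'I_M | lev i == l] | l <- iota 1 (lam - 1)].

Definition setb (C : Type) (M : nat) (s : 'I_M -> nat) (P : blocks C s)
  (i j : 'I_M) (X : 'M[C]_(s i, s j)) : blocks C s :=
  fun a b =>
    match i =P a, j =P b with
    | ReflectT e1, ReflectT e2 =>
        match e1 in _ = a', e2 in _ = b' return 'M[C]_(s a', s b') with
        | erefl, erefl => X end
    | _, _ => P a b
    end.
Arguments setb {C M s} P i j X.

Section Procedures.
Variables (C : numClosedFieldType) (M : nat) (s : 'I_M -> nat)
  (par : 'I_M -> 'I_M) (lev : 'I_M -> nat) (lam : nat).

Definition foldStep (B : blocks C s) (i : 'I_M) : blocks C s :=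
  fun j k =>
    if anc par i j && anc par i k then
      B j k + (- (invmx (B i i) *m B i j))^T *m B i k
    else if ((j == i) && anc par i k) || ((k == i) && anc par i j) then 0
    else B j k.

Definition Afold (A : blocks C s) (p : nat) : blocks C s :=
  foldl foldStep A (take p (foldOrder lev lam)).

Definition Psi (A : blocks C s) (i j : 'I_M) : 'M[C]_(s i, s j) :=
  let B := Afold A (index i (foldOrder lev lam)) in - (invmx (B i i) *m B i j).

(* D_i : diagonal blocks of A^(lam-1) *)
Definition Dblk (A : blocks C s) (i : 'I_M) : 'M[C]_(s i) :=
  Afold A (size (foldOrder lev lam)) i i.

Definition Amx (A : blocks C s) : 'M[C]_(\sum_i s i) := mxblock A.

Definition Ainv (A : blocks C s) (k j : 'I_M) : 'M[C]_(s k, s j) :=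
  submxblock (invmx (Amx A)) k j.

Definition Gless (A : blocks C s) (Sig : forall i : 'I_M, 'M[C]_(s i)) :
  'M[C]_(\sum_i s i) :=
  invmx (Amx A) *m mxdiag Sig *m adjmx (invmx (Amx A)).

Definition N0 (A : blocks C s) (Sig : forall i : 'I_M, 'M[C]_(s i)) : blocks C s :=
  fun j k => Sig j *m adjmx (Ainv A k j).

Definition Nstep (A : blocks C s) (N : blocks C s) (i : 'I_M) : blocks C s :=
  fun j k =>
    if anc par i j && anc par i k then N j k + (Psi A i j)^T *m N i k
    else N j k.

Definition Nfinal (A : blocks C s) Sig : blocks C s :=
  foldl (Nstep A) (N0 A Sig) (foldOrder lev lam).

Definition P0 (A : blocks C s) Sig : blocks C s :=
  fun j k => invmx (Dblk A j) *m Nfinal A Sig j k.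

Definition Pstep (A : blocks C s) (P : blocks C s) (i : 'I_M) : blocks C s :=
  let P1 := foldl (fun Q j => setb Q i j (Q i j + \sum_(k <- ancs par i) Psi A i k *m Q k j))
                  P (ancs par i) in
  let P2 := foldl (fun Q j => setb Q j i (- adjmx (Q i j))) P1 (ancs par i) in
  setb P2 i i (P2 i i + \sum_(j <- ancs par i) Psi A i j *m P2 j i).

Definition Pfinal (A : blocks C s) Sig : blocks C s :=
  foldl (Pstep A) (P0 A Sig) (rev (foldOrder lev lam)).

End Procedures.

(* Main.v *)
Require Import Defs.
From HB Require Import structures.
From mathcomp Require Import all_boot all_order all_algebra zify.
Import Order.TTheory GRing.Theory Num.Theory.
Local Open Scope ring_scope.
Set Implicit Arguments. Unset Strict Implicit. Unset Printing Implicit Defensive.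

Arguments Afold : simpl never.
Section Blocks.
Variables (C : numClosedFieldType) (M : nat) (s : 'I_M -> nat)
  (par : 'I_M -> 'I_M) (lev : 'I_M -> nat) (lam : nat) (A : blocks C s).
Local Notation n := (\sum_i s i)%N.
Local Notation Ps := (Psi par lev lam A).

Definition Fmx (i : 'I_M) : 'M[C]_n :=
  mxblock (fun a b => if (a == i) && anc par i b then Ps a b else 0).
Definition Emx i : 'M[C]_n := 1%:M + Fmx i.

Lemma subE_trmul (i a b : 'I_M) (Q : 'M[C]_n) :
  submxblock ((Emx i)^T *m Q) a b =
  submxblock Q a b + (if anc par i a then (Ps i a)^T *m submxblock Q i b else 0).
Proof.
rewrite /Emx linearD /= trmx1 mulmxDl mul1mx submxblockD; congr (_ + _).
rewrite /Fmx tr_mxblock -[Q in LHS]submxblockK mul_mxblock mxblockK.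
rewrite (bigD1 i) //= eqxx /= big1 ?addr0.
  by case: (anc par i a) => //; rewrite trmx0 mul0mx.
by move=> j nji; rewrite (negbTE nji) /= trmx0 mul0mx.
Qed.

Lemma subE_mul (i a b : 'I_M) (Q : 'M[C]_n) :
  submxblock (Emx i *m Q) a b =
  submxblock Q a b + \sum_l (if (a == i) && anc par i l then Ps a l *m submxblock Q l b else 0).
Proof.
rewrite /Emx mulmxDl mul1mx submxblockD; congr (_ + _).
rewrite /Fmx -[Q in LHS]submxblockK mul_mxblock mxblockK.
by apply: eq_bigr => l _; case: ifP => _ //; rewrite mul0mx.
Qed.

Lemma subE_mulr (i a b : 'I_M) (Q : 'M[C]_n) :
  submxblock (Q *m Emx i) a b =
  submxblock Q a b + (if anc par i b then submxblock Q a i *m Ps i b else 0).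
Proof.
rewrite -[LHS]trmxK tr_submxblock trmx_mul subE_trmul linearD /=.
rewrite tr_submxblock trmxK; congr (_ + _).
case: ifP => _; last by rewrite trmx0.
by rewrite trmx_mul trmxK tr_submxblock trmxK.
Qed.

Lemma sum_ancs (i : 'I_M) (F : 'I_M -> 'M[C]_(s i, s i)) :
  \sum_(k <- ancs par i) F k = \sum_(k | anc par i k) F k.
Proof. by rewrite /ancs big_filter big_enum_cond. Qed.


Lemma sum_ancsG (i : 'I_M) (m1 n1 : nat) (F : 'I_M -> 'M[C]_(m1, n1)) :
  \sum_(k <- ancs par i) F k = \sum_(k | anc par i k) F k.
Proof. by rewrite /ancs big_filter big_enum_cond. Qed.

Lemma setb_eq (P : blocks C s) i j X : setb P i j X i j = X.
Proof.
rewrite /setb; case: (i =P i) => [e|/(_ erefl)//].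
case: (j =P j) => [e'|/(_ erefl)//].
by rewrite (eq_irrelevance e erefl) (eq_irrelevance e' erefl).
Qed.

Lemma setb_neq (P : blocks C s) i j X a b :
  (a != i) || (b != j) -> setb P i j X a b = P a b.
Proof.
rewrite /setb; case: (i =P a) => [e|//]; case: (j =P b) => [e'|//].
by subst; rewrite !eqxx.
Qed.

Lemma foldl_row (P : blocks C s) i (l : seq 'I_M)
  (g : blocks C s -> forall j, 'M[C]_(s i, s j)) :
  (forall Q Q' j, (forall a, Q a j = Q' a j) -> g Q j = g Q' j) -> uniq l ->
  (forall a b, (a != i) || (b \notin l) ->
     foldl (fun Q j => setb Q i j (g Q j)) P l a b = P a b) /\
  (forall b, b \in l -> foldl (fun Q j => setb Q i j (g Q j)) P l i b = g P b).
Proof.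
move=> hg; elim: l P => [|x l IH] P /=; first by [].
case/andP => xl ul; have [IH1 IH2] := IH (setb P i x (g P x)) ul; split.
- move=> a b; rewrite in_cons negb_or => hab; rewrite IH1.
    by apply: setb_neq; case/orP: hab => [->//|/andP [->]]; rewrite orbT.
  by case/orP: hab => [->//|/andP [_ ->]]; rewrite orbT.
- move=> b; rewrite in_cons => /orP [/eqP ->|bl].
    by rewrite IH1 ?xl ?orbT // setb_eq.
  have nbx : b != x by apply: contraNneq xl => <-.
  by rewrite IH2 //; apply: hg => a'; rewrite setb_neq // nbx orbT.
Qed.

Lemma foldl_col (P : blocks C s) i (l : seq 'I_M) : uniq l -> i \notin l ->
  (forall a b, (b != i) || (a \notin l) ->
     foldl (fun Q j => setb Q j i (- adjmx (Q i j))) P l a b = P a b) /\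
  (forall a, a \in l -> foldl (fun Q j => setb Q j i (- adjmx (Q i j))) P l a i
     = - adjmx (P i a)).
Proof.
elim: l P => [|x l IH] P /=; first by [].
case/andP => xl ul; rewrite in_cons negb_or => /andP [nix nil].
have [IH1 IH2] := IH (setb P x i (- adjmx (P i x))) ul nil; split.
- move=> a b; rewrite in_cons negb_or => hab; rewrite IH1.
    by apply: setb_neq; case/orP: hab => [->|/andP [->]]; rewrite ?orbT.
  by case/orP: hab => [->//|/andP [_ ->]]; rewrite orbT.
- move=> a; rewrite in_cons => /orP [/eqP ->|al].
    by rewrite IH1 ?xl ?orbT // setb_eq.
  by rewrite IH2 // setb_neq // nix.
Qed.

Lemma adjmx_mul (m1 n1 p1 : nat) (X : 'M[C]_(m1, n1)) (Y : 'M[C]_(n1, p1)) :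
  adjmx (X *m Y) = adjmx Y *m adjmx X.
Proof. by rewrite /adjmx map_mxM trmx_mul. Qed.

Lemma adjmxK (m1 n1 : nat) (X : 'M[C]_(m1, n1)) : adjmx (adjmx X) = X.
Proof. by apply/matrixP => i j; rewrite !mxE conjCK. Qed.

Lemma adjmxN (m1 n1 : nat) (X : 'M[C]_(m1, n1)) : adjmx (- X) = - adjmx X.
Proof. by apply/matrixP => i j; rewrite !mxE rmorphN. Qed.

Lemma adjmx0 (m1 n1 : nat) : adjmx (0 : 'M[C]_(m1, n1)) = 0.
Proof. by apply/matrixP => i j; rewrite !mxE conjC0. Qed.

Lemma sub_adj (Q : 'M[C]_n) a b : submxblock (adjmx Q) a b = adjmx (submxblock Q b a).
Proof. by apply/matrixP => k l; rewrite !mxE. Qed.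

Lemma adj_diag (D : forall i, 'M[C]_(s i)) : adjmx (mxdiag D) = mxdiag (fun i => adjmx (D i)).
Proof.
apply/mxblockP => a b; rewrite sub_adj /mxdiag !mxblockK.
case: (eqVneq a b) => [<-|nab]; first by rewrite !conform_mx_id.
by rewrite adjmx0.
Qed.

Lemma subE_diagmul (D : forall i, 'M[C]_(s i)) (Q : 'M[C]_n) a b :
  submxblock (mxdiag D *m Q) a b = D a *m submxblock Q a b.
Proof. by rewrite -[Q in LHS]submxblockK mul_mxdiag_mxblock mxblockK. Qed.

Lemma mxdiag_mul (D D' : forall i, 'M[C]_(s i)) :
  mxdiag D *m mxdiag D' = mxdiag (fun i => D i *m D' i).
Proof.
rewrite [mxdiag D']/mxdiag mul_mxdiag_mxblock /mxdiag; apply: eq_mxblock => a b.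
by case: eqP => [<-|_]; rewrite ?conform_mx_id ?mulmx0.
Qed.

End Blocks.

Section Main.
Variables (C : numClosedFieldType) (M : nat) (s : 'I_M -> nat)
  (par : 'I_M -> 'I_M) (r : 'I_M) (lev : 'I_M -> nat) (lam : nat)
  (A : blocks C s) (Sig : forall i : 'I_M, 'M[C]_(s i)).
Hypotheses (Hroot : par r = r)
  (Hpar : forall i, i != r -> (lev i < lev (par i))%N)
  (Hlev : forall i, (1 <= lev i <= lam)%N)
  (Hlevanc : forall i j, anc par i j -> (lev i < lev j)%N)
  (Hlevroot : lev r = lam)
  (Hrootuniq : forall i, lev i = lam -> i = r)
  (Hinv : Amx A \in unitmx)
  (Hsym : (Amx A)^T = Amx A)
  (Hsparse : forall i j, ~~ related par i j -> A i j = 0)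
  (HfoldInv : forall i, i \in foldOrder lev lam ->
      Afold par lev lam A (index i (foldOrder lev lam)) i i \in unitmx)
  (HDinv : forall i, Dblk par lev lam A i \in unitmx)
  (Hskew : forall i, adjmx (Sig i) = - Sig i).

Local Notation o := (foldOrder lev lam).
Local Notation m := (size (foldOrder lev lam)).
Local Notation n := (\sum_i s i)%N.
Local Notation Ps := (Psi par lev lam A).
Local Notation E := (Emx par lev lam A).
Local Notation B := (Afold par lev lam A).

Lemma iter_r k : iter k par r = r.
Proof. by elim: k => //= k ->. Qed.

Lemma anc_r b : anc par r b = false.
Proof.
rewrite /anc; case: (eqVneq b r) => //= nbr.
by apply/negbTE/existsPn => k; rewrite iter_r eq_sym.
Qed.

Lemma anc_irr a : anc par a a = false.
Proof. by rewrite /anc eqxx. Qed.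

Lemma iter_small k a : exists k' : 'I_M, iter k' par a = iter k par a.
Proof.
have M0 : (0 < M)%N := leq_ltn_trans (leq0n _) (ltn_ord a).
elim: k {-2}k (leqnn k) => [|n IH] k Hk.
  by move: Hk; rewrite leqn0 => /eqP ->; exists (Ordinal M0).
case: (ltnP k M) => HkM; first by exists (Ordinal HkM).
pose f (j : 'I_M.+1) := iter j par a.
have : ~~ injectiveb f.
  apply/negP => /injectiveP Hf; have := @leq_card _ _ f Hf; rewrite !card_ord ltnn.
  by [].
move=> /injectivePn [x [y nxy exy]].
wlog lxy : x y nxy exy / (x < y)%N.
  move=> W; case: (ltngtP x y) => h; first exact: (W x y).
    by apply: (W y x) => //; rewrite eq_sym.
  by move: nxy; rewrite (val_inj h) eqxx.
have ey : (y <= k)%N by apply: leq_trans HkM; rewrite -ltnS.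
have Hk' : (k - (y - x) <= n)%N.
  have : (0 < y - x)%N by rewrite subn_gt0.
  by move: Hk; clear -ey lxy; lia.
have [k' ek'] := IH _ Hk'; exists k'; rewrite ek'.
have -> : k = ((k - y) + y)%N by rewrite subnK.
have -> : ((k - y) + y - (y - x) = (k - y) + x)%N by clear -ey lxy; lia.
by rewrite !iterD; congr (iter _ _ _); rewrite /f in exy; rewrite exy.
Qed.

Lemma anc_iter a b : anc par a b -> exists k, iter k par a = b.
Proof. by case/andP => _ /existsP [k /eqP <-]; exists k. Qed.

Lemma iter_anc k a b : iter k par a = b -> b != a -> anc par a b.
Proof.
move=> e nb; rewrite /anc nb /=; have [k' ek] := iter_small k a.
by apply/existsP; exists k'; rewrite ek e.
Qed.

Lemma anc_trans a b c : anc par a b -> anc par b c -> anc par a c.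
Proof.
move=> ab bc; have [k1 e1] := anc_iter ab; have [k2 e2] := anc_iter bc.
apply: (@iter_anc (k2 + k1)); first by rewrite iterD e1 e2.
apply/eqP => eca; have := Hlevanc ab; have := Hlevanc bc; rewrite eca.
by move=> h1 h2; have := ltn_trans h2 h1; rewrite ltnn.
Qed.

Lemma anc_chain a j k : anc par a j -> anc par a k -> [|| j == k, anc par j k | anc par k j].
Proof.
move=> aj ak; have [k1 e1] := anc_iter aj; have [k2 e2] := anc_iter ak.
case: (eqVneq j k) => //= njk.
case: (leqP k1 k2) => h.
  apply/orP; left; apply: (@iter_anc (k2 - k1)); last by rewrite eq_sym.
  by rewrite -e1 -iterD subnK.
apply/orP; right; apply: (@iter_anc (k1 - k2)) => //.
by rewrite -e2 -iterD subnK // ltnW.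
Qed.

Lemma anc_asym a b : anc par a b -> anc par b a = false.
Proof.
move=> ab; apply/negP => ba; have := Hlevanc ab; have := Hlevanc ba.
by move=> h1 h2; have := ltn_trans h2 h1; rewrite ltnn.
Qed.

Lemma anc_neq a b : anc par a b -> b != a.
Proof. by case/andP. Qed.



Lemma mem_o a : (a \in o) = (a != r).
Proof.
apply/flatten_mapP/idP => [[l]|na].
  rewrite mem_iota mem_filter => /andP [h1 h2] /andP [/eqP el _].
  apply/eqP => ear; move: h1 h2; rewrite -el ear Hlevroot.
  by clear; lia.
exists (lev a); last by rewrite mem_filter eqxx mem_enum.
rewrite mem_iota; have := Hlev a; have: lev a != lam.
  by apply: contra na => /eqP /Hrootuniq ->.
by clear; lia.
Qed.

Lemma uniq_flat st n : uniq (flatten [seq [seq i <- enum 'I_M | lev i == l] | l <- iota st n]).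
Proof.
elim: n st => [|n IH] st //=.
rewrite cat_uniq IH filter_uniq ?enum_uniq // andbT.
apply/hasPn => x /flatten_mapP [l]; rewrite mem_iota mem_filter => hl /andP [/eqP elx _].
rewrite mem_filter elx; apply/negP => /andP [/eqP e _]; move: hl; rewrite e.
by clear; lia.
Qed.

Lemma uniq_o : uniq o.
Proof. exact: uniq_flat. Qed.

Lemma index_lt a b : a \in o -> (lev a < lev b)%N -> (index a o < index b o)%N.
Proof.
move=> ao lab.
have hla : (1 <= lev a <= lam - 1)%N.
  move: ao; rewrite mem_o => na; have := Hlev a.
  have : lev a != lam by apply: contra na => /eqP /Hrootuniq ->.
  by clear; lia.
rewrite /foldOrder.
have -> : (lam - 1 = lev a + (lam - 1 - lev a))%N by clear -hla; lia.
rewrite iotaD map_cat flatten_cat !index_cat.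
have aIn : a \in flatten [seq [seq i <- enum 'I_M | lev i == l] | l <- iota 1 (lev a)].
  apply/flatten_mapP; exists (lev a); last by rewrite mem_filter eqxx mem_enum.
  by rewrite mem_iota; clear -hla; lia.
have bIn : b \notin flatten [seq [seq i <- enum 'I_M | lev i == l] | l <- iota 1 (lev a)].
  apply/flatten_mapP => [[l]]; rewrite mem_iota mem_filter => hl /andP [/eqP el _].
  by move: hl lab; rewrite el; clear; lia.
rewrite aIn (negbTE bIn).
by apply: leq_trans (leq_addr _ _); rewrite index_mem.
Qed.

Lemma index_r : index r o = size o.
Proof. by apply: memNindex; rewrite mem_o eqxx. Qed.

Lemma anc_index a b : anc par a b -> (index a o < index b o)%N.
Proof.
move=> ab; apply: index_lt (Hlevanc ab).
by rewrite mem_o; apply/eqP => e; move: ab; rewrite e anc_r.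
Qed.

Lemma index_le a : (index a o <= size o)%N.
Proof. exact: index_size. Qed.


Definition Epre p : 'M[C]_n := foldl (fun X x => X *m E x) 1%:M (take p o).

Lemma Afold_step p : (p < m)%N -> B p.+1 = foldStep par (B p) (nth r o p).
Proof. by move=> hp; rewrite /Afold (take_nth r hp) foldl_rcons. Qed.

Lemma Epre_step p : (p < m)%N -> Epre p.+1 = Epre p *m E (nth r o p).
Proof. by move=> hp; rewrite /Epre (take_nth r hp) foldl_rcons. Qed.

Lemma index_nth p : (p < m)%N -> index (nth r o p) o = p.
Proof. by move=> hp; rewrite index_uniq // uniq_o. Qed.

Lemma Psi_nth p b : (p < m)%N ->
  Ps (nth r o p) b = - (invmx (B p (nth r o p) (nth r o p)) *m B p (nth r o p) b).
Proof. by move=> hp; rewrite /Psi index_nth. Qed.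

Lemma sym_of (X : blocks C s) (P : 'M[C]_n) :
  mxblock X = P^T *m Amx A *m P -> forall a b, X b a = (X a b)^T.
Proof.
move=> e a b.
have hs : (mxblock X)^T = mxblock X by rewrite e !trmx_mul trmxK Hsym mulmxA.
by rewrite -[X b a](mxblockK X) -hs -tr_submxblock mxblockK.
Qed.

Lemma fold_inv p : (p <= m)%N ->
  [/\ mxblock (B p) = (Epre p)^T *m Amx A *m Epre p,
   (forall a b, (index a o < p)%N -> b != a -> B p a b = 0) &
   (forall a b, ~~ related par a b -> B p a b = 0)].
Proof.
elim: p => [_|p IH hp].
  rewrite /Epre /Afold take0 /=; split.
  - by rewrite trmx1 mul1mx mulmx1.
  - by [].
  - exact: Hsparse.
have hp' : (p < m)%N by [].
have [e1 e2 e3] := IH (ltnW hp').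
set i := nth r o p.
have io : i \in o by rewrite mem_nth.
have ii : index i o = p by rewrite index_nth.
have hsym := sym_of e1.
have hz : forall b, b != i -> ~~ anc par i b -> B p i b = 0.
  move=> b nbi nab; case hr: (related par i b); last by apply: e3; rewrite hr.
  move: hr; rewrite /related eq_sym (negbTE nbi) (negbTE nab) orbF /= => hba.
  rewrite hsym e2 ?trmx0 //; last by rewrite eq_sym.
  by rewrite -ii; apply: anc_index.
have hpsi : forall b, Ps i b = - (invmx (B p i i) *m B p i b) := fun b => Psi_nth b hp'.
have hii : B p i i \in unitmx by rewrite -{1}ii HfoldInv.
rewrite Afold_step // Epre_step // -/i.
set X := B p in e1 e2 e3 hpsi hii hsym hz *; clearbody X.
split.
- have -> : (Epre p *m E i)^T *m Amx A *m (Epre p *m E i) = (E i)^T *m mxblock X *m E i.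
    by rewrite e1 trmx_mul !mulmxA.
  apply/mxblockP => a b; rewrite mxblockK -mulmxA subE_trmul !subE_mulr !mxblockK.
  have key1 : forall b, X i i *m Ps i b = - X i b.
    by move=> c; rewrite hpsi mulmxN mulmxA mulmxV // mul1mx.
  have key2 : forall a, (Ps i a)^T = - (X a i *m invmx (X i i)).
    by move=> c; rewrite hpsi linearN /= trmx_mul trmx_inv -!hsym.
  rewrite /foldStep -!hpsi.
  case ha: (anc par i a); case hb: (anc par i b) => /=.
  + rewrite key1 addrN mulmx0 addr0; congr (_ + _).
    by rewrite key2 hpsi mulNmx mulmxN mulmxA.
  + rewrite (negbTE (anc_neq ha)) /= addr0.
    case: (eqVneq b i) => [->|nbi].
      by rewrite addr0 key2 mulNmx -mulmxA mulVmx // mulmx1 addrN.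
    by rewrite (hz b nbi) ?hb // addr0 mulmx0 addr0.
  + rewrite andbF orbF andbT addr0; case: (eqVneq a i) => [->|nai].
      by rewrite key1 addrN.
    by rewrite [X a i]hsym (hz a nai) ?ha // trmx0 mul0mx addr0.
  + by rewrite !andbF !addr0.
- move=> a b ha nba; rewrite /foldStep.
  case: ifP => [/andP [hia _]|_].
    by have := anc_index hia; rewrite ii; move: ha; clear; lia.
  case: ifP => // hc.
  move: ha; rewrite ltnS leq_eqVlt => /orP [/eqP hap|]; last by move=> h; exact: e2.
  have ao : a \in o by rewrite -index_mem hap.
  have eai : a = i by rewrite /i -hap nth_index.
  move: hc nba; rewrite eai eqxx /= => hc nbi.
  apply: hz => //; apply: contraFN hc => ->; by rewrite orTb.
- move=> a b nr; rewrite /foldStep.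
  case: ifP => [/andP [h1 h2]|_].
    by move: nr (anc_chain h1 h2); rewrite /related; case: (a == b); case: (anc par a b); case: (anc par b a).
  by case: ifP => // _; exact: e3.
Qed.


Definition Dm : 'M[C]_n := mxdiag (Dblk par lev lam A).
Definition Dinvm : 'M[C]_n := mxdiag (fun i => invmx (Dblk par lev lam A i)).
Definition Et : 'M[C]_n := Epre m.
Definition Ymx : 'M[C]_n := mxdiag Sig *m adjmx (invmx (Amx A)).
Definition Xmx : 'M[C]_n := Dinvm *m (Et^T *m Ymx).
Definition Gmx : 'M[C]_n := Gless A Sig.
Definition Esuf q : 'M[C]_n := foldr (fun x X => E x *m X) 1%:M (drop q o).
Definition Zmx q : 'M[C]_n := Esuf q *m Xmx.

Lemma Bm_diag : mxblock (B m) = Dm.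
Proof.
have [e1 e2 _] := fold_inv (leqnn m); have hsym := sym_of e1.
rewrite /Dm /mxdiag; apply: eq_mxblock => a b.
case: (eqVneq a b) => [<-|nab]; first by rewrite conform_mx_id.
change (B m a b = 0); case: (ltnP (index a o) m) => ha; first by apply: (e2 _ _ ha); rewrite eq_sym.
have ar : a = r.
  apply/eqP; rewrite -[a == r]negbK -mem_o -index_mem -leqNgt //.
have hb : (index b o < m)%N by rewrite index_mem mem_o -ar eq_sym.
by rewrite hsym e2 ?trmx0.
Qed.

Lemma Dm_e : Dm = Et^T *m Amx A *m Et.
Proof. by rewrite -Bm_diag /Et; have [-> _ _] := fold_inv (leqnn m). Qed.

Lemma DinvD : Dinvm *m Dm = 1%:M.
Proof.
rewrite /Dinvm /Dm mxdiag_mul -(mxdiagZ (p_ := s) 1); apply: eq_mxdiag => i.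
by rewrite mulVmx.
Qed.

Lemma inv_eq : invmx (Amx A) = Et *m Dinvm *m Et^T.
Proof.
have h1 : (Dinvm *m Et^T *m Amx A) *m Et = 1%:M.
  by rewrite -DinvD Dm_e !mulmxA.
have h2 := mulmx1C h1.
have h3 : (Et *m Dinvm *m Et^T) *m Amx A = 1%:M by rewrite -h2 !mulmxA.
by rewrite -[LHS]mul1mx -h3 -[_ *m invmx _]mulmxA mulmxV // mulmx1.
Qed.

Lemma G_eq : Gmx = Et *m Xmx.
Proof. by rewrite /Gmx /Gless /Xmx /Ymx {1}inv_eq !mulmxA. Qed.

Lemma G_skew a b : submxblock Gmx b a = - adjmx (submxblock Gmx a b).
Proof.
have h : adjmx Gmx = - Gmx.
  rewrite /Gmx /Gless !adjmx_mul adjmxK adj_diag.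
  rewrite (eq_mxdiag Hskew) mxdiagN mulNmx mulmxN !mulmxA.
  by [].
by rewrite -(sub_adj Gmx b a) h submxblockN opprK.
Qed.

Lemma foldl_mulE (N : 'M[C]_n) l :
  foldl (fun X x => X *m E x) N l = N *m foldr (fun x X => E x *m X) 1%:M l.
Proof.
elim: l N => [|x l IH] N /=; first by rewrite mulmx1.
by rewrite IH mulmxA.
Qed.

Lemma Et_suf : Et = Esuf 0.
Proof. by rewrite /Et /Epre /Esuf take_size drop0 foldl_mulE mul1mx. Qed.

Lemma Esuf_step q : (q < m)%N -> Esuf q = E (nth r o q) *m Esuf q.+1.
Proof. by move=> hq; rewrite /Esuf (drop_nth r hq). Qed.

Lemma Esuf_m : Esuf m = 1%:M.
Proof. by rewrite /Esuf drop_size. Qed.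

Lemma Z_step q a b : (q < m)%N ->
  submxblock (Zmx q) a b = submxblock (Zmx q.+1) a b +
    \sum_l (if (a == nth r o q) && anc par (nth r o q) l
            then Ps a l *m submxblock (Zmx q.+1) l b else 0).
Proof. by move=> hq; rewrite /Zmx Esuf_step // -mulmxA subE_mul. Qed.

Lemma Z_other q a b : (q < m)%N -> a != nth r o q ->
  submxblock (Zmx q) a b = submxblock (Zmx q.+1) a b.
Proof.
move=> hq na; rewrite Z_step // big1 ?addr0 // => l _.
by rewrite (negbTE na).
Qed.

Lemma R1 q : (q <= m)%N -> forall a b, (q <= index a o)%N ->
  submxblock (Zmx q) a b = submxblock Gmx a b.
Proof.
elim: q => [_ a b _|q IH hq a b ha]; first by rewrite /Zmx -Et_suf G_eq.
rewrite -Z_other //; first by apply: IH => //; [apply: ltnW | apply: ltnW].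
apply/eqP => e; move: ha; rewrite e index_nth // ltnn //.
Qed.

Lemma R2 d : (d <= m)%N -> forall a b, (index a o < m - d)%N ->
  submxblock (Zmx (m - d)) a b = submxblock Xmx a b.
Proof.
elim: d => [_ a b|d IH hd a b ha]; first by rewrite subn0 /Zmx Esuf_m mul1mx.
have e : (m - d = (m - d.+1).+1)%N by move: hd; clear; lia.
have hq : (m - d.+1 < m)%N by move: hd; clear; lia.
rewrite Z_other //; last first.
  apply/eqP => ea; move: ha; rewrite ea index_nth // ltnn //.
rewrite -e IH ?(ltnW hd) //; rewrite e; apply: ltn_trans ha _; by [].
Qed.

Lemma Grow q b : (q < m)%N ->
  submxblock Gmx (nth r o q) b = submxblock Xmx (nth r o q) b +
    \sum_(k <- ancs par (nth r o q)) Ps (nth r o q) k *m submxblock Gmx k b.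
Proof.
move=> hq; set i := nth r o q.
have ii : index i o = q by rewrite index_nth.
rewrite -(R1 (ltnW hq) _ (_ : (q <= index i o)%N)) ?ii //.
rewrite Z_step // -/i.
have -> : submxblock (Zmx q.+1) i b = submxblock Xmx i b.
  have e : q.+1 = (m - (m - q.+1))%N by move: hq; clear; lia.
  rewrite e R2 //; first by rewrite leq_subr.
  by rewrite -e ii.
congr (_ + _); rewrite sum_ancsG [RHS]big_mkcond; apply: eq_bigr => k _.
rewrite eqxx /=; case: ifP => // hk; rewrite R1 //.
by rewrite -ii; apply: anc_index.
Qed.

Definition Nfold p := foldl (Nstep par lev lam A) (N0 A Sig) (take p o).
Arguments Nfold : simpl never.

Lemma N_inv p : (p <= m)%N -> forall a b, (b == a) || anc par a b ->
  Nfold p a b = submxblock ((Epre p)^T *m Ymx) a b.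
Proof.
elim: p => [_ a b _|p IH hp a b hab].
  by rewrite /Nfold /Epre take0 /= trmx1 mul1mx /Ymx subE_diagmul sub_adj.
have hp' : (p < m)%N by [].
rewrite /Nfold (take_nth r hp') foldl_rcons -/(Nfold p).
rewrite Epre_step // trmx_mul -mulmxA subE_trmul.
set i := nth r o p; rewrite /Nstep.
case hia: (anc par i a).
  have hib : anc par i b.
    by case/orP: hab => [/eqP ->//|hab]; exact: anc_trans hia hab.
  rewrite hib /= IH ?(ltnW hp') //; rewrite IH ?(ltnW hp') ?hib ?orbT //.
by rewrite /= IH ?(ltnW hp') // addr0.
Qed.

Lemma P0_val a b : (b == a) || anc par a b ->
  P0 par lev lam A Sig a b = submxblock Xmx a b.
Proof.
move=> hab; rewrite /P0 /Nfinal.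
have := N_inv (leqnn m) hab; rewrite /Nfold take_size => ->.
by rewrite /Xmx /Dinvm subE_diagmul.
Qed.

Definition Sst q := foldl (Pstep par lev lam A) (P0 par lev lam A Sig) (rev (drop q o)).
Arguments Sst : simpl never.

Lemma Sst_step q : (q < m)%N -> Sst q = Pstep par lev lam A (Sst q.+1) (nth r o q).
Proof. by move=> hq; rewrite /Sst (drop_nth r hq) rev_cons foldl_rcons. Qed.

Lemma mem_ancs i k : (k \in ancs par i) = anc par i k.
Proof. by rewrite /ancs mem_filter mem_enum andbT. Qed.

Lemma P_inv d : (d <= m)%N -> forall a b, (b == a) || anc par a b ->
  ((m - d <= index a o)%N ->
     Sst (m - d) a b = submxblock Gmx a b /\ Sst (m - d) b a = submxblock Gmx b a) /\
  ((index a o < m - d)%N -> Sst (m - d) a b = submxblock Xmx a b).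
Proof.
elim: d => [_ a b hab|d IH hd a b hab].
  rewrite subn0; have -> : Sst m = P0 par lev lam A Sig by rewrite /Sst drop_size.
  split; last by move=> _; exact: P0_val.
  move=> ha; have ar : a = r.
    apply/eqP; rewrite -[a == r]negbK -mem_o -index_mem -leqNgt //.
  have eb : b = a by case/orP: hab => [/eqP //|]; rewrite ar anc_r.
  subst b; rewrite P0_val ?eqxx //.
  by rewrite -(R1 (leqnn m) _ ha) /Zmx Esuf_m mul1mx.
set q := (m - d.+1)%N.
have eq1 : (m - d = q.+1)%N by rewrite /q; move: hd; clear; lia.
have hq : (q < m)%N by rewrite /q; move: hd; clear; lia.
have {}IH := IH (ltnW hd); rewrite eq1 in IH.
rewrite Sst_step //; set i := nth r o q; set S := Sst q.+1 in IH *.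
have ii : index i o = q by rewrite index_nth.
have ancq : forall k, anc par i k -> (q.+1 <= index k o)%N.
  by move=> k hk; rewrite -ii; apply: anc_index.
set l := ancs par i.
pose g := fun (Q : blocks C s) (j : 'I_M) => Q i j + \sum_(k <- l) Ps i k *m Q k j.
pose P1 := foldl (fun Q j => setb Q i j (g Q j)) S l.
pose P2 := foldl (fun Q j => setb Q j i (- adjmx (Q i j))) P1 l.
have -> : Pstep par lev lam A S i = setb P2 i i (P2 i i + \sum_(j <- l) Ps i j *m P2 j i) by [].
have ul : uniq l by rewrite /l /ancs filter_uniq // enum_uniq.
have nil : i \notin l by rewrite mem_ancs anc_irr.
have hg : forall Q Q' j, (forall a, Q a j = Q' a j) -> g Q j = g Q' j.
  move=> Q Q' j h; rewrite /g h; congr (_ + _); apply: eq_bigr => k _; by rewrite h.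
have [P1o P1r] := foldl_row S hg ul.
have [P2o P2c] := foldl_col P1 ul nil.
have rowval : forall j, anc par i j -> g S j = submxblock Gmx i j.
  move=> j hij; rewrite /g (Grow j hq) -/i; congr (_ + _).
    by have [_ ->] := IH i j (ltac:(by rewrite hij orbT)); rewrite // ii.
  apply: eq_big_seq => k; rewrite mem_ancs => hik; congr (_ *m _).
  have := anc_chain hij hik; rewrite eq_sym.
  case/or3P => [/eqP ekj|hjk|hkj].
  - rewrite ekj; have [h _] := IH j j (ltac:(by rewrite eqxx)).
    by have [-> _] := h (ancq _ hij).
  - have [h _] := IH j k (ltac:(by rewrite hjk orbT)).
    by have [_ ->] := h (ancq _ hij).
  - have [h _] := IH k j (ltac:(by rewrite hkj orbT)).
    by have [-> _] := h (ancq _ hik).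
have P1row : forall j, anc par i j -> P1 i j = submxblock Gmx i j.
  by move=> j hij; rewrite /P1 P1r ?mem_ancs //; exact: (rowval j hij).
have P2col : forall j, anc par i j -> P2 j i = submxblock Gmx j i.
  by move=> j hij; rewrite /P2 P2c ?mem_ancs // P1row // (G_skew i j).
case: (eqVneq a i) => [eai|nai].
  subst a; split; last by rewrite ii ltnn.
  move=> _; case/orP: hab => [/eqP ->|hib].
    suff -> : setb P2 i i (P2 i i + \sum_(j <- l) Ps i j *m P2 j i) i i = submxblock Gmx i i by [].
    rewrite setb_eq (Grow i hq) -/i; congr (_ + _).
      rewrite /P2 P2o ?nil ?orbT // /P1 P1o ?nil ?orbT //.
      by have [_ ->] := IH i i (ltac:(by rewrite eqxx)); rewrite // ii.
    by apply: eq_big_seq => j; rewrite mem_ancs => hij; rewrite P2col.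
  have nbi : b != i by apply: anc_neq.
  split.
    by rewrite setb_neq ?nbi ?orbT // /P2 P2o ?nbi // P1row.
  by rewrite setb_neq ?nbi // P2col.
have hb : (b != i) || (a \notin l).
  case: (eqVneq b i) => //= ebi; rewrite mem_ancs; apply/negP => hia.
  move: hab; rewrite ebi eq_sym (negbTE nai) /= => hai.
  by move: (anc_asym hia); rewrite hai.
have e1 : setb P2 i i (P2 i i + \sum_(j <- l) Ps i j *m P2 j i) a b = S a b.
  by rewrite setb_neq ?nai // /P2 P2o // /P1 P1o ?nai.
have e2 : setb P2 i i (P2 i i + \sum_(j <- l) Ps i j *m P2 j i) b a = S b a.
  by rewrite setb_neq ?nai ?orbT // /P2 P2o ?nai // /P1 P1o.
rewrite e1 e2; split => ha.
  have ha' : (q.+1 <= index a o)%N.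
    rewrite ltn_neqAle ha andbT; apply/eqP => eqa.
    have ao : a \in o by rewrite -index_mem -eqa.
    by move: nai; rewrite /i eqa nth_index // eqxx.

  by have [h _] := IH a b hab; exact: (h ha').
by have [_ h] := IH a b hab; exact: (h (ltn_trans ha (ltnSn q))).
Qed.

End Main.

Theorem mainTheorem3
  (C : numClosedFieldType) (M : nat) (s : 'I_M -> nat)
  (par : 'I_M -> 'I_M) (r : 'I_M) (lev : 'I_M -> nat) (lam : nat)
  (A : blocks C s) (Sig : forall i : 'I_M, 'M[C]_(s i))
  (Hroot : par r = r)
  (Hpar : forall i, i != r -> (lev i < lev (par i))%N)
  (Hlev : forall i, (1 <= lev i <= lam)%N)
  (Hlevanc : forall i j, anc par i j -> (lev i < lev j)%N)
  (Hlevroot : lev r = lam)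
  (Hrootuniq : forall i, lev i = lam -> i = r)
  (Hinv : Amx A \in unitmx)
  (Hsym : (Amx A)^T = Amx A)
  (Hsparse : forall i j, ~~ related par i j -> A i j = 0)
  (HfoldInv : forall i, i \in foldOrder lev lam ->
      Afold par lev lam A (index i (foldOrder lev lam)) i i \in unitmx)
  (HDinv : forall i, Dblk par lev lam A i \in unitmx)
  (Hskew : forall i, adjmx (Sig i) = - Sig i) :
  forall i j : 'I_M, (j == i) || anc par i j ->
    Pfinal par lev lam A Sig i j = submxblock (Gless A Sig) i j /\
    Pfinal par lev lam A Sig j i = submxblock (Gless A Sig) j i.
Proof.
move=> i j hij.
have := P_inv Hroot Hlev Hlevanc Hlevroot Hrootuniq Hinv Hsym Hsparse HfoldInv HDinv Hskew
  (leqnn _) hij.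
rewrite subnn => -[h _]; have [h1 h2] := h (leq0n _).
by move: h1 h2; rewrite /Sst drop0.
Qed.
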